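(* Let $g:\mathbb{R}^n\to\mathbb{R}$ be a convex, continuously differentiable function and let $f_d:\mathbb{R}^n\to\mathbb{R}^n$ be continuously differentiable such that $x\mapsto g(f_d(x))$ is concave. Then the optimization problem $$\max_{\alpha\ge 0}\ \min_{x\in\mathbb{R}^n}\ \{\alpha g(x)-g(f_d(x))\}$$ is equivalent to the nonlinear optimization problem $$\max_{x\in\mathbb{R}^n,\ \alpha\in\mathbb{R}}\ \{\alpha g(x)-g(f_d(x)) : \alpha\nabla_x g(x)-\nabla_x\big(g(f_d(x))\big)=0,\ \alpha\ge 0\}.$$ *)

(* Defs.v *)
From HB Require Import structures.
From mathcomp Require Import all_boot all_order all_algebra.
From mathcomp Require Import all_classical all_reals.
From mathcomp Require Import topology normedtype derive convex.
Set Implicit Arguments. Unset Strict Implicit. Unset Printing Implicit Defensive.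
Import Order.TTheory GRing.Theory Num.Theory.
Import numFieldNormedType.Exports.
Local Open Scope classical_set_scope.
Local Open Scope ring_scope.

Definition grad (R : realType) (n : nat) (f : 'rV[R]_n -> R) (x : 'rV[R]_n)
  : 'rV[R]_n := \row_(i < n) 'D_(delta_mx 0 i) f x.

Definition C1 (R : realType) (n : nat) (W : normedModType R)
  (f : 'rV[R]_n -> W) : Prop :=
  (forall x, differentiable f x) /\
  (forall i : 'I_n, continuous (fun x => 'D_(delta_mx 0 i) f x)).

Definition concave_function (R : realType) (n : nat) (f : 'rV[R]_n -> R) :=
  convex_function setT (fun x : 'rV[R]_n => - f x).

Definition objective (R : realType) (n : nat) (g : 'rV[R]_n -> R)
  (fd : 'rV[R]_n -> 'rV[R]_n) (a : R) (x : 'rV[R]_n) : R :=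
  a * g x - g (fd x).

Definition is_minimizer (R : realType) (n : nat) (g : 'rV[R]_n -> R)
  (fd : 'rV[R]_n -> 'rV[R]_n) (a : R) (x : 'rV[R]_n) : Prop :=
  forall y, objective g fd a x <= objective g fd a y.

(* feasibility for the nonlinear program *)
Definition stationary (R : realType) (n : nat) (g : 'rV[R]_n -> R)
  (fd : 'rV[R]_n -> 'rV[R]_n) (a : R) (x : 'rV[R]_n) : Prop :=
  a *: grad g x - grad (fun y => g (fd y)) x = 0 /\ 0 <= a.

Definition solves_maxmin (R : realType) (n : nat) (g : 'rV[R]_n -> R)
  (fd : 'rV[R]_n -> 'rV[R]_n) (a : R) (x : 'rV[R]_n) : Prop :=
  0 <= a /\ is_minimizer g fd a x /\
  forall a' x', 0 <= a' -> is_minimizer g fd a' x' ->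
    objective g fd a' x' <= objective g fd a x.

Definition solves_nlp (R : realType) (n : nat) (g : 'rV[R]_n -> R)
  (fd : 'rV[R]_n -> 'rV[R]_n) (a : R) (x : 'rV[R]_n) : Prop :=
  stationary g fd a x /\
  forall a' x', stationary g fd a' x' ->
    objective g fd a' x' <= objective g fd a x.

(* Main.v *)
Require Import Defs.
From HB Require Import structures.
From mathcomp Require Import all_boot all_order all_algebra.
From mathcomp Require Import all_classical all_reals.
From mathcomp Require Import topology normedtype derive convex.
From mathcomp Require Import lra.
Import Order.TTheory GRing.Theory Num.Theory.
Import numFieldNormedType.Exports.
Local Open Scope ring_scope.
Local Open Scope classical_set_scope.

Section Aux.
Context {R : realType} {V : normedModType R}.

Lemma right_cvg (q : R -> R) : cvg (q @ 0^') -> cvg (q @ 0^'+).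
Proof.
move=> dq; apply/cvg_ex; exists (lim (q @ 0^')).
apply: cvg_trans dq; apply: cvg_app.
move=> A [e egt0 Ae]; exists e => // x xe xgt0; apply: Ae => //.
exact/lt0r_neq0.
Qed.

Lemma D_ge0 (psi : V -> R) x v : derivable psi x v ->
  (forall y, psi x <= psi y) -> 0 <= 'D_v psi x.
Proof.
move=> dv hmin; rewrite /derive cvg_at_rightE //.
apply: limr_ge; first exact: right_cvg.
near=> h => /=.
have h0 : 0 < h by near: h; exists 1 => /=.
rewrite /GRing.scale /=.
by apply: mulr_ge0; [rewrite invr_ge0 ltW|rewrite subr_ge0].
Unshelve. all: by end_near. Qed.

Lemma D_le (psi : V -> R) x v : derivable psi x v ->
  (forall h, 0 < h -> h < 1 -> psi (h *: v + x) <= h * psi (v + x) + (1 - h) * psi x) ->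
  'D_v psi x <= psi (v + x) - psi x.
Proof.
move=> dv hc; rewrite /derive cvg_at_rightE //.
apply: limr_le; first exact: right_cvg.
near=> h => /=.
have h0 : 0 < h by near: h; exists 1 => /=.
have h1 : h < 1.
  near: h; exists 1 => //= y; rewrite /ball /= sub0r normrN => /(le_lt_trans (ler_norm _)) //.
rewrite /GRing.scale /= ler_pdivrMl //.
have := hc h h0 h1; lra.
Unshelve. all: by end_near. Qed.
End Aux.

Lemma conv_ineq (R : realType) n (f : 'rV[R]_n -> R) : convex_function setT f ->
  forall u w (h : R), 0 <= h -> h <= 1 -> f (h *: u + (1-h) *: w) <= h * f u + (1-h) * f w.
Proof.
move=> cf u w h h0 h1.
have := cf (@interval_inference.Itv01 _ h h0 h1) u w; rewrite !inE => /(_ I I).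
by rewrite /conv /=.
Qed.

Section Main.
Context (R : realType) (n : nat)
  (g : 'rV[R]_n -> R) (fd : 'rV[R]_n -> 'rV[R]_n).
Hypotheses (cg : convex_function setT g) (C1g : C1 g) (C1fd : C1 fd)
  (ccv : concave_function (fun x => g (fd x))).

Let psi (a : R) := objective g fd a.

Lemma psi_diff a x : differentiable (psi a) x.
Proof.
have dg : differentiable (a \*: g) x by apply: differentiableZ; exact: C1g.1.
have dgf : differentiable (g \o fd) x.
  by apply: differentiable_comp; [exact: C1fd.1|exact: C1g.1].
by have := differentiableB dg dgf.
Qed.

Lemma psi_D a x i : 'D_(delta_mx 0 i) (psi a) x =
  (a *: grad g x - grad (fun y => g (fd y)) x) 0 i.
Proof.
rewrite !mxE.
have dg : derivable g x (delta_mx 0 i) by apply: diff_derivable; exact: C1g.1.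
have dgf : derivable (g \o fd) x (delta_mx 0 i).
  by apply: diff_derivable; apply: differentiable_comp; [exact: C1fd.1|exact: C1g.1].
have -> : psi a = (a \*: g) - (g \o fd) by [].
rewrite deriveB //; last exact: derivableZ.
by rewrite deriveZ.
Qed.

Lemma psi_convex a h u w : 0 <= a -> 0 <= h -> h <= 1 ->
  psi a (h *: u + (1-h) *: w) <= h * psi a u + (1-h) * psi a w.
Proof.
move=> a0 h0 h1; rewrite /psi /objective.
have c1 := @conv_ineq _ _ _ cg u w h h0 h1.
have c2 := @conv_ineq _ _ _ ccv u w h h0 h1; simpl in c2.
have c3 := ler_wpM2l a0 c1.
move: c2 c3; set z := h *: u + (1 - h) *: w; lra.
Qed.

Lemma part1 a x : 0 <= a -> is_minimizer g fd a x <-> stationary g fd a x.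
Proof.
move=> a0; split.
- move=> hmin; split => //; apply/matrixP => i j; rewrite (ord1 i) -psi_D mxE.
  have d1 := @D_ge0 _ _ (psi a) x (delta_mx 0 j) (diff_derivable (psi_diff a x)) hmin.
  have d2 := @D_ge0 _ _ (psi a) x (- delta_mx 0 j) (diff_derivable (psi_diff a x)) hmin.
  rewrite !deriveE in d1 d2 *; try exact: psi_diff.
  rewrite linearN /= in d2.
  apply/eqP; rewrite eq_le d1 andbT -oppr_ge0 //.
- move=> [st _] y.
  have D0 : 'D_(y - x) (psi a) x = 0.
    rewrite deriveE; last exact: psi_diff.
    rewrite [y - x]matrix_sum_delta big_ord1 linear_sum /=.
    apply: big1 => j _; rewrite linearZ /= -deriveE; last exact: psi_diff.
    rewrite psi_D st.
    by rewrite [X in _ *: X]mxE scaler0.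
  have := @D_le _ _ (psi a) x (y - x) (diff_derivable (psi_diff a x)).
  rewrite D0 subrK subr_ge0; apply => h h0 h1.
  have -> : h *: (y - x) + x = h *: y + (1 - h) *: x.
    by rewrite scalerBr scalerBl scale1r addrA addrAC.
  by apply: psi_convex => //; exact: ltW.
Qed.
End Main.

Theorem theorem7 (R : realType) (n : nat)
  (g : 'rV[R]_n -> R) (fd : 'rV[R]_n -> 'rV[R]_n) :
  convex_function setT g -> C1 g ->
  C1 fd -> concave_function (fun x => g (fd x)) ->
  (* the feasible points correspond: for a >= 0, x attains the inner min
     iff (a, x) is feasible for the nonlinear program *)
  (forall (a : R) (x : 'rV[R]_n), 0 <= a ->
     is_minimizer g fd a x <-> stationary g fd a x) /\
  (* the optimal solutions (hence optimal values) coincide *)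
  (forall (a : R) (x : 'rV[R]_n),
     solves_maxmin g fd a x <-> solves_nlp g fd a x).
Proof.
move=> cg C1g C1fd ccv.
have P1 := @part1 R n g fd cg C1g C1fd ccv.
split => // a x; split.
- move=> [a0 [hm hmax]]; split; first exact/P1.
  move=> a' x' st'; apply: hmax; first exact: st'.2.
  by apply/P1 => //; exact: st'.2.
- move=> [st hmax]; have a0 := st.2; split => //; split; first exact/P1.
  by move=> a' x' a0' hm'; apply: hmax; apply/P1.
Qed.
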